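(* There is a unique $\Re$-module homomorphism $\Phi\colon\Re/I_\nu(a,b,c)\to M_\nu(a,b,c)$ sending $1+I_\nu(a,b,c)$ to $m_0$, and $\Phi$ is an isomorphism.
   Context: $\mathbb F$ is algebraically closed with $\operatorname{char}\mathbb F\ne2$. The Racah algebra $\Re$ is the unital associative $\mathbb F$-algebra with generators $A,B,C,D$ and relations $[A,B]=[B,C]=[C,A]=2D$ together with the requirement that each of $\alpha:=[A,D]+AC-BA$, $\beta:=[B,D]+BA-CB$, $\gamma:=[C,D]+CB-AC$ is central in $\Re$; $\delta:=A+B+C$. For $a,b,c,\nu\in\mathbb F$ and $i\in\mathbb Z$: $\theta_i=(a+\tfrac\nu2-i)(a+\tfrac\nu2-i+1)$, $\theta_i^*=(b+\tfrac\nu2-i)(b+\tfrac\nu2-i+1)$, $\varphi_i=i(i-\nu-1)(a+b+c+\tfrac\nu2-i+2)(a+b-c+\tfrac\nu2-i+1)$, $\zeta=(c-b)(c+b+1)(a-\tfrac\nu2)(a+\tfrac\nu2+1)$, $\zeta^*=(a-c)(a+c+1)(b-\tfrac\nu2)(b+\tfrac\nu2+1)$, $\eta=\tfrac\nu2(\tfrac\nu2+1)+a(a+1)+b(b+1)+c(c+1)$. $I_\nu(a,b,c)$ is the left ideal of $\Re$ generated by $B-\theta_0^*$, $(B-\theta_1^* )(A-\theta_0)-\varphi_1$, $\alpha-\zeta$, $\beta-\zeta^*$, $\delta-\eta$. $M_\nu(a,b,c)$ is the $\Re$-module with $\mathbb F$-basis $\{m_i\}_{i\ge0}$ such that $Am_i=\theta_im_i+m_{i+1}$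 ($i\ge0$), $Bm_0=\theta_0^*m_0$, $Bm_i=\theta_i^*m_i+\varphi_im_{i-1}$ ($i\ge1$), and $\alpha,\beta,\delta$ act as $\zeta,\zeta^*,\eta$. *)

(* Defs.v *)
From HB Require Import structures.
From mathcomp Require Import all_boot all_order all_algebra.
Set Implicit Arguments. Unset Strict Implicit. Unset Printing Implicit Defensive.
Import Order.TTheory GRing.Theory.
Local Open Scope ring_scope.

Definition commr (S : pzRingType) (x y : S) : S := x * y - y * x.
Definition centralr (S : pzRingType) (x : S) : Prop := forall y : S, x * y = y * x.

Definition alphaR (S : pzRingType) (A B C D : S) : S := commr A D + A * C - B * A.
Definition betaR  (S : pzRingType) (A B C D : S) : S := commr B D + B * A - C * B.
Definition gammaR (S : pzRingType) (A B C D : S) : S := commr C D + C * B - A * C.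
Definition deltaR (S : pzRingType) (A B C : S) : S := A + B + C.

Definition racah_rel (S : pzRingType) (A B C D : S) : Prop :=
  [/\ commr A B = 2%:R * D, commr B C = 2%:R * D & commr C A = 2%:R * D] /\
  [/\ centralr (alphaR A B C D), centralr (betaR A B C D)
    & centralr (gammaR A B C D)].

(* (R; A,B,C,D) is the Racah algebra over F: the generators satisfy the
   defining relations and (R; A,B,C,D) is universal among F-algebras with
   four such elements (= presentation by generators and relations). *)
Definition is_racah_algebra (F : fieldType) (R : algType F) (A B C D : R) : Prop :=
  racah_rel A B C D /\
  forall (S : algType F) (a b c d : S), racah_rel a b c d ->
    exists f : {lrmorphism R -> S},
      [/\ f A = a, f B = b, f C = c, f D = d &
          forall g : {lrmorphism R -> S},
            g A = a -> g B = b -> g C = c -> g D = d -> g =1 f].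

Section Scalars.
Variable F : fieldType.
Definition theta (a nu : F) (i : nat) : F :=
  (a + nu / 2%:R - i%:R) * (a + nu / 2%:R - i%:R + 1).
Definition thetas (b nu : F) (i : nat) : F :=
  (b + nu / 2%:R - i%:R) * (b + nu / 2%:R - i%:R + 1).
Definition phi (a b c nu : F) (i : nat) : F :=
  i%:R * (i%:R - nu - 1) * (a + b + c + nu / 2%:R - i%:R + 2%:R)
       * (a + b - c + nu / 2%:R - i%:R + 1).
Definition zeta (a b c nu : F) : F :=
  (c - b) * (c + b + 1) * (a - nu / 2%:R) * (a + nu / 2%:R + 1).
Definition zetas (a b c nu : F) : F :=
  (a - c) * (a + c + 1) * (b - nu / 2%:R) * (b + nu / 2%:R + 1).
Definition eta (a b c nu : F) : F :=
  nu / 2%:R * (nu / 2%:R + 1) + a * (a + 1) + b * (b + 1) + c * (c + 1).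
End Scalars.

Definition in_I (F : fieldType) (R : algType F) (A B C D : R) (a b c nu : F)
    (x : R) : Prop :=
  exists r1 r2 r3 r4 r5 : R,
    x = r1 * (B - (thetas b nu 0)%:A)
      + r2 * ((B - (thetas b nu 1)%:A) * (A - (theta a nu 0)%:A) - (phi a b c nu 1)%:A)
      + r3 * (alphaR A B C D - (zeta a b c nu)%:A)
      + r4 * (betaR A B C D - (zetas a b c nu)%:A)
      + r5 * (deltaR A B C - (eta a b c nu)%:A).

(* m is an F-basis of V (F acting through k |-> k%:A in R): the map sending
   a finitely supported coefficient sequence (a polynomial) p to
   \sum_i p_i m_i is bijective. *)
Definition is_Fbasis (F : fieldType) (R : algType F) (V : lmodType R)
    (m : nat -> V) : Prop :=
  bijective (fun p : {poly F} => \sum_(i < size p) (p`_i)%:A *: m i).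

Definition M_rel (F : fieldType) (R : algType F) (A B C D : R) (a b c nu : F)
    (V : lmodType R) (m : nat -> V) : Prop :=
  [/\ forall i : nat, A *: m i = (theta a nu i)%:A *: m i + m i.+1,
      B *: m 0%N = (thetas b nu 0)%:A *: m 0%N &
      forall i : nat, B *: m i.+1 =
        (thetas b nu i.+1)%:A *: m i.+1 + (phi a b c nu i.+1)%:A *: m i] /\
  [/\ forall v : V, alphaR A B C D *: v = (zeta a b c nu)%:A *: v,
      forall v : V, betaR A B C D *: v = (zetas a b c nu)%:A *: v
    & forall v : V, deltaR A B C *: v = (eta a b c nu)%:A *: v].

(* Main.v *)
Require Import Defs.
From HB Require Import structures.
From mathcomp Require Import all_boot all_order all_algebra.
From mathcomp Require Import ring.
From Stdlib Require Import ClassicalEpsilon.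
Import GRing.Theory.
Local Open Scope ring_scope.

Set Implicit Arguments. Unset Strict Implicit. Unset Printing Implicit Defensive.

Definition asb (P : Prop) : bool := if excluded_middle_informative P then true else false.
Lemma asbP (P : Prop) : reflect P (asb P).
Proof. rewrite /asb; case: excluded_middle_informative => h; constructor => //. Qed.

Section Gen.
Variables (F : fieldType) (R : algType F) (P : R -> Prop).
Hypotheses (P1 : P 1) (PM : forall x y, P x -> P y -> P (x * y))
  (PL : forall k x y, P x -> P y -> P (k *: x + y)).
Definition Pb : {pred R} := fun x => asb (P x).
Lemma Pb_closed : subalg_closed Pb.
Proof.
split; first by apply/asbP.
- by move=> k u v /asbP hu /asbP hv; apply/asbP; apply: PL.
- by move=> u v /asbP hu /asbP hv; apply/asbP; apply: PM.
Qed.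
HB.instance Definition _ := GRing.isSubalgClosed.Build F R Pb (GRing.subalg_closed_semi Pb_closed).
Record TT := MkTT { tval : R; tP : tval \in Pb }.
HB.instance Definition _ := [isSub for tval].
HB.instance Definition _ := [Choice of TT by <:].
HB.instance Definition _ := [SubChoice_isSubAlgebra of TT by <:].
Section Comp.
Variable f : {lrmorphism R -> TT}.
Definition vf (r : R) : R := val (f r).
Lemma vf_lin : linear vf.
Proof. move=> k x y; rewrite /vf linearP. by rewrite raddfD; congr (_ + _); apply: (linearZZ (val : TT -> R)). Qed.
Lemma vf_mm : monoid_morphism vf.
Proof. by split=> [|x y]; rewrite /vf ?rmorph1 ?rmorphM. Qed.
HB.instance Definition _ := GRing.isLinear.Build F R R *:%R vf vf_lin.
HB.instance Definition _ := GRing.isMonoidMorphism.Build R R vf vf_mm.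
Check (vf : {lrmorphism R -> R}).
End Comp.
Check (idfun : {lrmorphism R -> R}).

Lemma gen_all (A B C D : R) : is_racah_algebra A B C D ->
  P A -> P B -> P C -> P D -> forall r, P r.
Proof.
move=> [hrel huniv] PA PB PC PD.
have mk x : P x -> x \in Pb by move=> h; apply/asbP.
pose a' : TT := MkTT (mk _ PA). pose b' : TT := MkTT (mk _ PB).
pose c' : TT := MkTT (mk _ PC). pose d' : TT := MkTT (mk _ PD).
have vE (x y : TT) : tval x = tval y -> x = y by apply: val_inj.
have hrel' : racah_rel a' b' c' d'.
  case: hrel => [[h1 h2 h3] [h4 h5 h6]].
  split; split.
  - by apply: val_inj; rewrite /commr !(rmorphB, rmorphM, rmorph_nat) /= -h1.
  - by apply: val_inj; rewrite /commr !(rmorphB, rmorphM, rmorph_nat) /= -h2.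
  - by apply: val_inj; rewrite /commr !(rmorphB, rmorphM, rmorph_nat) /= -h3.
  - move=> y; apply: val_inj; rewrite /alphaR /commr.
    by rewrite !(rmorphB, rmorphM, rmorphD) /=; apply: h4.
  - move=> y; apply: val_inj; rewrite /betaR /commr.
    by rewrite !(rmorphB, rmorphM, rmorphD) /=; apply: h5.
  - move=> y; apply: val_inj; rewrite /gammaR /commr.
    by rewrite !(rmorphB, rmorphM, rmorphD) /=; apply: h6.
have [f [fA fB fC fD _]] := huniv _ _ _ _ _ hrel'.
have [f0 [_ _ _ _ u0]] := huniv _ _ _ _ _ hrel.
move=> r.
have e1 := u0 idfun erefl erefl erefl erefl r.
have e2 : vf f r = f0 r.
  by apply: u0 => /=; rewrite /vf ?fA ?fB ?fC ?fD.
have -> : r = tval (f r) by rewrite [LHS]e1 -e2.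
by apply/asbP; apply: (tP (f r)).
Qed.
End Gen.


Section LinGen.
Variables (F : fieldType) (R : algType F) (W : lmodType R).
Implicit Types (k l : F) (q : W) (r : R).

Lemma sDl k l q : (k + l)%:A *: q = k%:A *: q + l%:A *: q.
Proof. by rewrite scalerDl scalerDl. Qed.
Lemma sBl k l q : (k - l)%:A *: q = k%:A *: q - l%:A *: q.
Proof. by rewrite scalerBl scalerBl. Qed.
Lemma sM k l q : k%:A *: (l%:A *: q) = (k * l)%:A *: q.
Proof. by rewrite scalerA mulr_algl scalerA. Qed.
Lemma rs r k q : r *: (k%:A *: q) = k%:A *: (r *: q).
Proof. by rewrite !scalerA mulr_algr mulr_algl. Qed.
Lemma s1 q : 1%:A *: q = q.
Proof. by rewrite !scale1r. Qed.
Lemma s0 q : 0%:A *: q = 0.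
Proof. by rewrite !scale0r. Qed.

Variable f : nat -> W.
Definition Ef (p : {poly F}) : W := \sum_(j < size p) (p`_j)%:A *: f j.

Lemma Ef_widen (p : {poly F}) n : (size p <= n)%N -> Ef p = \sum_(j < n) (p`_j)%:A *: f j.
Proof.
move=> hn; rewrite /Ef (big_ord_widen n (fun j => (p`_j)%:A *: f j) hn).
rewrite big_mkcond; apply: eq_bigr => j _; case: ifP => // /negbT.
by rewrite -leqNgt => hj; rewrite nth_default // s0.
Qed.

Lemma Ef_add (p p' : {poly F}) : Ef (p + p') = Ef p + Ef p'.
Proof.
pose n := maxn (size p) (size p').
rewrite (@Ef_widen (p + p') n) ?size_polyD // (@Ef_widen p n) ?leq_maxl //.
rewrite (@Ef_widen p' n) ?leq_maxr // -big_split /=.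
by apply: eq_bigr => j _; rewrite coefD sDl.
Qed.

Lemma Ef_scale k (p : {poly F}) : Ef (k *: p) = k%:A *: Ef p.
Proof.
rewrite (@Ef_widen (k *: p) (size p)) ?size_scale_leq // /Ef scaler_sumr.
by apply: eq_bigr => j _; rewrite coefZ sM.
Qed.

Lemma Ef_X j : Ef 'X^j = f j.
Proof.
rewrite /Ef size_polyXn big_ord_recr /= coefXn eqxx s1 big1 ?add0r //.
by move=> i _; rewrite coefXn (ltn_eqF (ltn_ord i)) s0.
Qed.

Lemma Ef_0 : Ef 0 = 0.
Proof. by rewrite /Ef size_poly0 big_ord0. Qed.

Lemma Ef_sub (p q : {poly F}) : Ef (p - q) = Ef p - Ef q.
Proof. by apply/eqP; rewrite eq_sym subr_eq -Ef_add subrK. Qed.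

Lemma Ef_opp (p : {poly F}) : Ef (- p) = - Ef p.
Proof. by rewrite -sub0r Ef_sub Ef_0 sub0r. Qed.

Variables (t s ph : nat -> F).
Definition Ahat (p : {poly F}) : {poly F} :=
  \poly_(j < (size p).+1) (t j * p`_j + (if j is k.+1 then p`_k else 0)).
Definition Bhat (p : {poly F}) : {poly F} :=
  \poly_(j < size p) (s j * p`_j + ph j.+1 * p`_j.+1).

Lemma coef_Ahat p j : (Ahat p)`_j = t j * p`_j + (if j is k.+1 then p`_k else 0).
Proof.
rewrite coef_poly; case: ifP => // /negbT; rewrite -leqNgt => hj.
rewrite nth_default ?mulr0 ?add0r; last by apply: leq_trans hj.
by case: j hj => // k hk; rewrite nth_default.
Qed.

Lemma coef_Bhat p j : (Bhat p)`_j = s j * p`_j + ph j.+1 * p`_j.+1.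
Proof.
rewrite coef_poly; case: ifP => // /negbT; rewrite -leqNgt => hj.
by rewrite !nth_default ?mulr0 ?addr0 //; apply: leq_trans hj _.
Qed.

Lemma size_Ahat p : (size (Ahat p) <= (size p).+1)%N.
Proof. exact: size_poly. Qed.

Lemma GA (A : R) : (forall j, A *: f j = (t j)%:A *: f j + f j.+1) ->
  forall p, A *: Ef p = Ef (Ahat p).
Proof.
move=> hA p; rewrite (@Ef_widen (Ahat p) (size p).+1) ?size_Ahat //.
rewrite /Ef scaler_sumr.
under eq_bigr => j _ do rewrite rs hA scalerDr sM.
under [RHS]eq_bigr => j _ do rewrite coef_Ahat sDl.
rewrite big_split [RHS]big_split /=.
rewrite [X in _ = X + _]big_ord_recr [X in _ = _ + X]big_ord_recl /=.
rewrite nth_default // mulr0 s0 addr0 s0 add0r.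
congr (_ + _); apply: eq_bigr => j _; rewrite ?lift0 ?(mulrC (t _)) //.
Qed.

Hypothesis ph0 : ph 0 = 0.

Lemma GB (B : R) (N : nat) :
  (forall j, (j < N)%N -> B *: f j = (s j)%:A *: f j + (ph j)%:A *: f j.-1) ->
  forall p : {poly F}, (size p <= N)%N -> B *: Ef p = Ef (Bhat p).
Proof.
move=> hB p hp; rewrite (@Ef_widen (Bhat p) (size p)) ?size_poly //.
rewrite /Ef scaler_sumr.
under eq_bigr => j _ do rewrite rs (hB _ (leq_trans (ltn_ord j) hp)) scalerDr !sM.
under [RHS]eq_bigr => j _ do rewrite coef_Bhat sDl.
rewrite big_split [RHS]big_split /=.
congr (_ + _); first by apply: eq_bigr => j _; rewrite mulrC.
case hs: (size p) => [|n]; first by rewrite !big_ord0.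
rewrite big_ord_recl /= ph0 mulr0 s0 add0r.
rewrite [RHS]big_ord_recr /= [p`_n.+1]nth_default ?hs // mulr0 s0 addr0.
by apply: eq_bigr => j _; rewrite /bump leq0n add1n add0n mulrC.
Qed.
End LinGen.


Lemma t1 (V : zmodType) (x1 x2 x3 y1 y3 : V) : (x1 + x2 + x3) - (y1 + x2 + y3) = (x1 - y1) + (x3 - y3).
Proof. rewrite [y1 + x2]addrC -[x2 + y1 + y3]addrA opprD addrA (addrAC x1) addrK.
by rewrite opprD addrACA. Qed.
Lemma t2 (V : zmodType) (x1 x2 x3 y2 y3 : V) : (x1 + x2 + x3) - (x1 + y2 + y3) = (x2 - y2) + (x3 - y3).
Proof. by rewrite -(addrC x2) -(addrC y2) t1. Qed.
Lemma t3 (V : zmodType) (x1 x2 x3 y1 y2 : V) : (x1 + x2 + x3) - (y1 + y2 + x3) = (x1 - y1) + (x2 - y2).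
Proof. by rewrite -(addrAC x1) -(addrAC y1) t1. Qed.

Section Main.
Variables (F : fieldType) (hF2 : (2%:R : F) != 0) (R : algType F) (A B C D : R)
  (hR : is_racah_algebra A B C D) (a b c nu : F) (V : lmodType R) (m : nat -> V)
  (hbasis : is_Fbasis m) (hM : M_rel A B C D a b c nu m)
  (Q : lmodType R) (pi : {linear R^o -> Q})
  (hpi_surj : forall q : Q, exists x : R, pi x = q)
  (hpi_ker : forall x : R, pi x = 0 <-> in_I A B C D a b c nu x).

Local Notation th := (theta a nu).
Local Notation ths := (thetas b nu).
Local Notation ph := (phi a b c nu).
Local Notation ze := (zeta a b c nu).
Local Notation zes := (zetas a b c nu).
Local Notation et := (Defs.eta a b c nu).
Local Notation al := (alphaR A B C D).
Local Notation be := (betaR A B C D).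
Local Notation de := (deltaR A B C).

Lemma ph0 : ph 0 = 0. Proof. by rewrite /phi !mul0r. Qed.

Lemma hrel : racah_rel A B C D. Proof. by case: hR. Qed.

Lemma D_expr : D = (2%:R^-1 : F) *: (A * B - B * A).
Proof.
case: hrel => [[h1 _ _] _]; rewrite /commr in h1.
by rewrite h1 mulr_natl -scaler_nat scalerA mulVf // scale1r.
Qed.

Lemma gen3 (P : R -> Prop) : P 1 -> (forall x y, P x -> P y -> P (x * y)) ->
  (forall k x y, P x -> P y -> P (k *: x + y)) -> P A -> P B -> P C ->
  forall r, P r.
Proof.
move=> P1 PM PL PA PB PC; apply (gen_all P1 PM PL hR PA PB PC).
have P0 : P 0 by have := PL (-1) 1 1 P1 P1; rewrite scaleN1r addNr.
have -> : D = (2%:R^-1 : F) *: (A * B) + ((- 2%:R^-1) *: (B * A) + 0).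
  by rewrite addr0 scaleNr D_expr scalerBr.
by apply PL; [apply PM | apply PL; [apply PM|]].
Qed.

Lemma de_central : centralr de.
Proof.
case: hrel => [[h1 h2 h3] _]; rewrite /commr in h1 h2 h3.
have key x : de * x - x * de = 0 -> de * x = x * de by move/eqP; rewrite subr_eq0 => /eqP.
apply: (gen3 (P := fun y => de * y = y * de)).
- by rewrite mulr1 mul1r.
- by move=> x y /= hx hy; rewrite mulrA hx -!mulrA hy.
- by move=> k x y /= hx hy; rewrite mulrDr [(k *: x + y) * _]mulrDl hy -scalerAr -scalerAl hx.
- apply: key; rewrite /deltaR !mulrDl !mulrDr t2 -(opprB (A * B)) h1 h3.
  by rewrite addrC subrr.
- apply: key; rewrite /deltaR !mulrDl !mulrDr t1 h1.
  by rewrite -(opprB (B * C)) h2 subrr.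
- apply: key; rewrite /deltaR !mulrDl !mulrDr t3 -(opprB (C * A)) h3.
  by rewrite h2 addNr.
Qed.

Lemma piM (x y : R) : pi (x * y) = x *: pi y.
Proof. exact: linearZ. Qed.

Lemma pi_eq (x y : R) : in_I A B C D a b c nu (x - y) -> pi x = pi y.
Proof.
by move/hpi_ker => h; apply/eqP; rewrite -subr_eq0 -linearB /= h.
Qed.

Lemma Q_de (q : Q) : de *: q = (et%:A : R) *: q.
Proof.
have [x <-] := hpi_surj q; rewrite -!piM de_central mulr_algl -mulr_algr.
apply: pi_eq; exists 0, 0, 0, 0, x.
by rewrite !mul0r !add0r mulrBr.
Qed.

Lemma Q_al (q : Q) : al *: q = (ze%:A : R) *: q.
Proof.
case: hrel => [_ [hal _ _]].
have [x <-] := hpi_surj q; rewrite -!piM hal mulr_algl -mulr_algr.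
apply: pi_eq; exists 0, 0, x, 0, 0.
by rewrite !mul0r !add0r !addr0 [x * (_ - _%:A)]mulrBr.
Qed.

Fixpoint w (n : nat) : R := if n is k.+1 then (A - (th k)%:A) * w k else 1.
Definition u n : Q := pi (w n).

Lemma uA n : A *: u n = ((th n)%:A : R) *: u n + u n.+1.
Proof. by rewrite [u n.+1]/u /= piM -/(u n) scalerBl addrC subrK. Qed.

Definition uBP j := B *: u j = ((ths j)%:A : R) *: u j + ((ph j)%:A : R) *: u j.-1.

Lemma uB0 : uBP 0.
Proof.
rewrite /uBP ph0 s0 addr0 /u /= -!piM; apply: pi_eq.
exists 1, 0, 0, 0, 0.
by rewrite !mulr1 mul1r !mul0r !addr0.
Qed.

Lemma uB1 : uBP 1.
Proof.
rewrite /uBP /u /= -!piM -linearD /=; apply: pi_eq.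
exists 0, 1, 0, 0, 0.
rewrite !mulr1 mul1r !mul0r add0r !addr0.
by rewrite [(B - _) * _]mulrBl opprD addrA.
Qed.

Lemma mA j : A *: m j = ((th j)%:A : R) *: m j + m j.+1.
Proof. by case: hM => [[h _ _] _]; apply: h. Qed.

Lemma mB j : B *: m j = ((ths j)%:A : R) *: m j + ((ph j)%:A : R) *: m j.-1.
Proof.
case: hM => [[_ h0 hS] _]; case: j => [|j]; last exact: hS.
by rewrite h0 ph0 s0 addr0.
Qed.

Lemma V_de (v : V) : de *: v = (et%:A : R) *: v.
Proof. by case: hM => [_ [_ _ h]]; apply: h. Qed.
Lemma V_al (v : V) : al *: v = (ze%:A : R) *: v.
Proof. by case: hM => [_ [h _ _]]; apply: h. Qed.

Local Notation Ah := (Ahat th).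
Local Notation Bh := (Bhat ths ph).

Lemma VGA (p : {poly F}) : Ef m (Ah p) = A *: Ef m p.
Proof. exact/esym/(GA mA). Qed.
Lemma VGB (p : {poly F}) : Ef m (Bh p) = B *: Ef m p.
Proof. by apply/esym/(GB ph0 (N := size p)) => // j _; apply: mB. Qed.

Lemma al_exp (W : lmodType R) (hde : forall q : W, de *: q = (et%:A : R) *: q) (q : W) :
  al *: q = ((2%:R^-1 : F)%:A : R) *: (A *: (A *: (B *: q)) - A *: (B *: (A *: q)))
    - ((2%:R^-1 : F)%:A : R) *: (A *: (B *: (A *: q)) - B *: (A *: (A *: q)))
    + A *: ((et%:A : R) *: q - A *: q - B *: q) - B *: (A *: q).
Proof.
have hD (x : W) : D *: x = ((2%:R^-1 : F)%:A : R) *: (A *: (B *: x) - B *: (A *: x)).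
  rewrite {1}D_expr -[(2%:R^-1 : F) *: _]mulr_algl -scalerA scalerBl -!scalerA.
  by [].
have hC (x : W) : C *: x = (et%:A : R) *: x - A *: x - B *: x.
  have -> : C = de - A - B.
    by rewrite /deltaR [A + B]addrC (addrAC B) addrK [B + C]addrC addrK.
  by rewrite !scalerBl hde.
have -> : al *: q = A *: (D *: q) - D *: (A *: q) + A *: (C *: q) - B *: (A *: q).
  by rewrite /alphaR /commr !(scalerDl, scaleNr) -!scalerA.
by rewrite !hD hC rs !scalerBr.
Qed.

Definition Oh (p : {poly F}) : {poly F} :=
  (2%:R^-1) *: (Ah (Ah (Bh p)) - Ah (Bh (Ah p)))
  - (2%:R^-1) *: (Ah (Bh (Ah p)) - Bh (Ah (Ah p)))
  + Ah (et *: p - Ah p - Bh p) - Bh (Ah p).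

Lemma V_Oh p : Oh p = ze *: p.
Proof.
apply: (bij_inj hbasis).
change (Ef m (Oh p) = Ef m (ze *: p)).
rewrite Ef_scale -V_al (al_exp V_de).
by rewrite /Oh !(Ef_add, Ef_opp, Ef_scale, VGA, VGB).
Qed.

Lemma QGA (p : {poly F}) : Ef u (Ah p) = A *: Ef u p.
Proof. exact/esym/(GA uA). Qed.

Lemma QGB N (h : forall j, (j < N)%N -> uBP j) (p : {poly F}) : (size p <= N)%N ->
  Ef u (Bh p) = B *: Ef u p.
Proof. by move=> hp; apply/esym/(GB ph0 h). Qed.

Lemma Bh_lin (p q : {poly F}) k : Bh (p + k *: q) = Bh p + k *: Bh q.
Proof.
apply/polyP => j; rewrite !(coefD, coefZ, coef_Bhat); ring.
Qed.

Lemma Bh_XN N : (0 < N)%N -> Bh 'X^N = ths N *: 'X^N + ph N *: 'X^(N.-1).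
Proof.
case: N => // n _; apply/polyP => j.
rewrite !(coefD, coefZ, coef_Bhat, coefXn) eqSS /=.
have [->|hj] := eqVneq j n.+1.
  by rewrite (gtn_eqF (ltnSn n)) !mulr0.
rewrite !mulr0 !add0r; have [->|] := eqVneq j n; by rewrite ?mulr0.
Qed.

Definition Dl N := B *: u N - (((ths N)%:A : R) *: u N + ((ph N)%:A : R) *: u N.-1).

Lemma QGBD N (h : forall j, (j < N)%N -> uBP j) (q : {poly F}) : (0 < N)%N -> (size q <= N.+1)%N ->
  Ef u (Bh q) = B *: Ef u q - ((q`_N)%:A : R) *: Dl N.
Proof.
move=> hN hq.
set k := q`_N.
set q' := q - k *: 'X^N.
have eq : q = q' + k *: 'X^N by rewrite subrK.
have sq' : (size q' <= N)%N.
  apply/leq_sizeP => j hj; rewrite /q' coefB coefZ coefXn.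
  have [->|hjN] := eqVneq j N; first by rewrite mulr1 subrr.
  rewrite mulr0 subr0; move/leq_sizeP: hq; apply.
  by rewrite ltn_neqAle eq_sym hjN hj.
clearbody q' k.
rewrite {1 2}eq Bh_lin Ef_add Ef_scale (QGB h sq') (Bh_XN hN).
have -> : Ef u (ths N *: 'X^N + ph N *: 'X^(N.-1)) = ((ths N)%:A : R) *: u N + ((ph N)%:A : R) *: u N.-1.
  by rewrite Ef_add !Ef_scale !Ef_X.
have -> : Ef u (q' + k *: 'X^N) = Ef u q' + (k%:A : R) *: u N by rewrite Ef_add Ef_scale Ef_X.
rewrite /Dl [B *: (_ + _)]scalerDr (rs B) -addrA; congr (_ + _).
by rewrite scalerBr opprB addrC subrK.
Qed.

Lemma cAA i : (Ah (Ah 'X^i))`_i.+2 = 1.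
Proof.
rewrite !coef_Ahat !coefXn eqxx.
rewrite (gtn_eqF (ltnSn i)) (gtn_eqF (leqnSn i.+1)).
by rewrite /= !(mulr0, add0r, addr0).
Qed.

Lemma extract (W : lmodType R) (K1 K2 K3 K4 Y Z : W) (h : F) : h != 0 ->
  K1 - ((h%:A : R) *: (K2 - (Y - Z))) + K3 - K4 = K1 - ((h%:A : R) *: (K2 - Y)) + K3 - K4 ->
  Z = 0.
Proof.
move=> hh /addIr /addIr /addrI /oppr_inj e.
have : K2 - (Y - Z) = K2 - Y.
  by rewrite -[LHS]s1 -(mulVf hh) -sM e sM mulVf // s1.
move/addrI/oppr_inj => e2.
have : Y + (- Z) = Y + 0 by rewrite addr0.
by move/addrI/eqP; rewrite oppr_eq0 => /eqP.
Qed.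

Lemma uB_step i : (forall j, (j < i.+2)%N -> uBP j) -> uBP i.+2.
Proof.
move=> h.
suff : Dl i.+2 = 0 by move/eqP; rewrite /Dl subr_eq0 => /eqP.
have e := congr1 (Ef u) (V_Oh 'X^i).
rewrite Ef_scale -Q_al (al_exp Q_de) in e.
move: e; rewrite /Oh !(Ef_add, Ef_opp, Ef_scale, QGA).
have sz1 : (size ('X^i : {poly F}) <= i.+2)%N by rewrite size_polyXn.
have sz2 : (size (Ah 'X^i) <= i.+2)%N.
  by apply: leq_trans (size_Ahat _ _) _; rewrite size_polyXn.
have sz3 : (size (Ah (Ah 'X^i)) <= i.+3)%N.
  by apply: leq_trans (size_Ahat _ _) _.
rewrite (QGBD h _ sz3) // cAA (QGB h sz2) (QGB h sz1) !QGA => e.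
have := extract _ e; rewrite s1; apply.
by rewrite invr_eq0.
Qed.

Lemma uB n : uBP n.
Proof.
elim/ltn_ind: n => -[|[|i]] IH; [exact: uB0 | exact: uB1 |].
by apply: uB_step => j hj; apply: IH.
Qed.

Lemma exE (v : V) : exists p : {poly F}, Ef m p == v.
Proof. by case: hbasis => g _ hg; exists (g v); rewrite -[X in _ == X]hg. Qed.

Definition coord (v : V) : {poly F} := xchoose (exE v).
Lemma coordK v : Ef m (coord v) = v.
Proof. exact/eqP/(xchooseP (exE v)). Qed.
Lemma Ef_inj : injective (Ef m).
Proof. by move=> p q e; apply: (bij_inj hbasis). Qed.
Lemma coordE p : coord (Ef m p) = p.
Proof. by apply: Ef_inj; rewrite coordK. Qed.

Definition Psi (v : V) : Q := Ef u (coord v).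
Lemma PsiE p : Psi (Ef m p) = Ef u p.
Proof. by rewrite /Psi coordE. Qed.
Lemma PsiD v v' : Psi (v + v') = Psi v + Psi v'.
Proof. by rewrite -(coordK v) -(coordK v') -Ef_add !PsiE Ef_add. Qed.
Lemma PsiZ k v : Psi ((k%:A : R) *: v) = (k%:A : R) *: Psi v.
Proof. by rewrite -(coordK v) -Ef_scale !PsiE Ef_scale. Qed.
Lemma Psi0 : Psi 0 = 0.
Proof. by rewrite -(Ef_0 m) PsiE Ef_0. Qed.
Lemma PsiB v v' : Psi (v - v') = Psi v - Psi v'.
Proof. by rewrite -{2}(subrK v' v) (PsiD (v - v')) addrK. Qed.
Lemma Psi_m j : Psi (m j) = u j.
Proof. by rewrite -(Ef_X m j) PsiE Ef_X. Qed.

Definition Pr (r : R) := forall v, Psi (r *: v) = r *: Psi v.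

Lemma Pr_basis r : (forall j, Psi (r *: m j) = r *: u j) -> Pr r.
Proof.
move=> h v; rewrite -(coordK v); set p := coord v; rewrite PsiE /Ef.
rewrite !scaler_sumr (big_morph Psi PsiD Psi0).
apply: eq_bigr => j _; by rewrite rs PsiZ h rs.
Qed.

Lemma Pr_all r : Pr r.
Proof.
apply: gen3.
- by move=> v; rewrite !scale1r.
- by move=> x y hx hy v; rewrite -!scalerA hx hy.
- move=> k x y hx hy v; rewrite scalerDl PsiD hy -mulr_algl -scalerA PsiZ hx.
  by rewrite scalerA scalerDl.
- by apply: Pr_basis => j; rewrite mA PsiD PsiZ !Psi_m uA.
- by apply: Pr_basis => j; rewrite mB PsiD !PsiZ !Psi_m uB.
- have -> : C = de - A - B.
    by rewrite /deltaR [A + B]addrC (addrAC B) addrK [B + C]addrC addrK.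
  move=> v; rewrite !scalerBl !PsiB V_de PsiZ Q_de.
  have hA : Pr A by apply: Pr_basis => j; rewrite mA PsiD PsiZ !Psi_m uA.
  have hB : Pr B by apply: Pr_basis => j; rewrite mB PsiD !PsiZ !Psi_m uB.
  by rewrite hA hB.
Qed.

Lemma annih x : in_I A B C D a b c nu x -> x *: m 0 = 0.
Proof.
case=> [r1 [r2 [r3 [r4 [r5 ->]]]]].
have g1 : (B - (ths 0)%:A) *: m 0 = 0.
  by case: hM => [[_ h0 _] _]; rewrite scalerBl h0 subrr.
have g2 : ((B - (ths 1)%:A) * (A - (th 0)%:A) - (ph 1)%:A) *: m 0 = 0.
  have e1 : (A - (th 0)%:A) *: m 0 = m 1 by rewrite scalerBl mA [LHS]addrC addKr.
  have e2 : (B - (ths 1)%:A) *: m 1 = (ph 1)%:A *: m 0 by rewrite scalerBl (mB 1) [LHS]addrC addKr.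
  by rewrite scalerBl -scalerA e1 e2 subrr.

have g3 : (al - ze%:A) *: m 0 = 0 by rewrite scalerBl V_al subrr.
have g4 : (be - zes%:A) *: m 0 = 0.
  by case: hM => [_ [_ h _]]; rewrite scalerBl h subrr.
have g5 : (de - et%:A) *: m 0 = 0 by rewrite scalerBl V_de subrr.
by rewrite 4!scalerDl -(scalerA r1) -(scalerA r2) -(scalerA r3) -(scalerA r4) -(scalerA r5) g1 g2 g3 g4 g5 !scaler0 !addr0.
Qed.

Lemma exQ (q : Q) : exists x : R, pi x == q.
Proof. by have [x hx] := hpi_surj q; exists x; rewrite hx. Qed.

Definition Phi0 (q : Q) : V := xchoose (exQ q) *: m 0.

Lemma Phi0E x : Phi0 (pi x) = x *: m 0.
Proof.
rewrite /Phi0; set y := xchoose _.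
have hy : pi y = pi x := eqP (xchooseP (exQ (pi x))).
have : in_I A B C D a b c nu (y - x).
  by apply/hpi_ker; rewrite linearB /= hy subrr.
by move/annih; rewrite scalerBl => /eqP; rewrite subr_eq0 => /eqP.
Qed.

Lemma Phi0_lin : linear Phi0.
Proof.
move=> r q q'.
have [x <-] := hpi_surj q; have [x' <-] := hpi_surj q'.
have -> : r *: pi x + pi x' = pi (r * x + x').
  by rewrite linearD /= piM.
by rewrite !Phi0E scalerDl scalerA.
Qed.

HB.instance Definition _ := GRing.isLinear.Build R Q V *:%R Phi0 Phi0_lin.

Lemma mw j : m j = w j *: m 0.
Proof.
elim: j => [|j IH]; first by rewrite /= scale1r.
by rewrite /= -scalerA -IH scalerBl mA [RHS]addrC addKr.
Qed.

Lemma main_exists :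
  exists Phi : {linear Q -> V},
    [/\ Phi (pi 1) = m 0%N,
        (forall Psi : {linear Q -> V}, Psi (pi 1) = m 0%N -> Psi =1 Phi)
      & bijective Phi].
Proof.
exists Phi0; split.
- by have := Phi0E 1; rewrite scale1r.
- move=> Psi' h q; have [x <-] := hpi_surj q.
  have -> : pi x = x *: pi 1 by rewrite -piM mulr1.
  change (Psi' (x *: pi 1) = Phi0 (x *: pi 1)).
  rewrite !linearZ /= h.
  by have := Phi0E 1; rewrite scale1r => ->.
- exists Psi.
  + move=> q; have [x <-] := hpi_surj q.
    change (Psi (Phi0 (pi x)) = pi x).
    by rewrite Phi0E Pr_all Psi_m /u /= -piM mulr1.
  + move=> v; change (Phi0 (Psi v) = v).
    rewrite -(coordK v) PsiE /Ef.
    rewrite linear_sum; apply: eq_bigr => j _.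
    by rewrite linearZ /= /u Phi0E -mw.
Qed.

End Main.


Unset Implicit Arguments. Set Strict Implicit.
Theorem theorem3p6
  (F : closedFieldType) (hF2 : (2%:R : F) != 0)
  (R : algType F) (A B C D : R) (hR : is_racah_algebra A B C D)
  (a b c nu : F)
  (* M = M_nu(a,b,c): a left R-module V with F-basis (m_i)_{i>=0} *)
  (V : lmodType R) (m : nat -> V)
  (hbasis : is_Fbasis m) (hM : M_rel A B C D a b c nu m)
  (* Q = R / I_nu(a,b,c) with canonical projection pi : R -> Q *)
  (Q : lmodType R) (pi : {linear R^o -> Q})
  (hpi_surj : forall q : Q, exists x : R, pi x = q)
  (hpi_ker : forall x : R, pi x = 0 <-> in_I A B C D a b c nu x) :
  exists Phi : {linear Q -> V},
    [/\ Phi (pi 1) = m 0%N,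
        (forall Psi : {linear Q -> V}, Psi (pi 1) = m 0%N -> Psi =1 Phi)
      & bijective Phi].
Proof.
exact: (main_exists hF2 hR hbasis hM hpi_surj hpi_ker).
Qed.
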